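(* Let $N\ge 5$ be odd. Let $G_{N,2}$ be the graph with vertex set $\mathbb Z_N$ in which two distinct vertices $x,y$ are adjacent iff $y-x\not\equiv\pm2\pmod N$, and $G_{N,1}$ the graph with vertex set $\mathbb Z_N$ in which distinct $x,y$ are adjacent iff $y-x\not\equiv\pm1\pmod N$. Put $\Delta=\sqrt{N(N-4)}$, $\rho=\frac{N-2+\Delta}{2}$. For $u,v\in\mathbb Z_N$ let $q\equiv v-u\pmod N$, let $s\equiv 2^{-1}\pmod N$, and define $\delta_2(q)=\min\{sq\bmod N,\;N-(sq\bmod N)\}$. Then the effective resistance $R^{(2)}(u,v)$ between $u$ and $v$ in $G_{N,2}$ equals the effective resistance in $G_{N,1}$ between two vertices at circulant distance $\delta_2(q)$ (e.g. $0$ and $\delta_2(q)$), and explicitly \[ R^{(2)}(u,v)=\frac{2}{\Delta(\rho^N+1)}\left\{\rho^N-1+(-1)^{\delta_2(q)}\left(\rho^{\delta_2(q)}-\rho^{N-\delta_2(q)}\right)\right\}. \]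
   Context: Effective resistance is computed with unit conductance on every edge. *)

(* Defs.v *)
From HB Require Import structures.
From mathcomp Require Import all_boot all_order all_algebra.
From Stdlib Require Import ClassicalEpsilon.
Set Implicit Arguments. Unset Strict Implicit. Unset Printing Implicit Defensive.
Import Order.TTheory GRing.Theory Num.Theory.
Local Open Scope ring_scope.

Definition zdiff (N : nat) (x y : 'I_N) : nat := ((y + N - x) %% N)%N.

Definition Gadj (N k : nat) : rel 'I_N :=
  fun x y => [&& x != y, zdiff x y != (k %% N)%N & zdiff x y != ((N - k) %% N)%N].

Definition laplacian (R : nzRingType) (n : nat) (adj : rel 'I_n) : 'M[R]_n :=
  \matrix_(i, j) (if i == j then (#|[set k | adj i k]|)%:R
                  else - ((adj i j : nat)%:R)).

(* phi is a potential for unit current injected at u and extracted at v. *)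
Definition unit_potential (R : nzRingType) (n : nat) (adj : rel 'I_n)
  (u v : 'I_n) (phi : 'cV[R]_n) : Prop :=
  laplacian R adj *m phi = delta_mx u 0 - delta_mx v 0.

(* Effective resistance = potential difference phi(u) - phi(v) for a unit
   current flow from u to v (well defined on a connected graph). *)
Definition eff_res (R : nzRingType) (n : nat) (adj : rel 'I_n) (u v : 'I_n) : R :=
  let phi := epsilon (inhabits (0 : 'cV[R]_n)) (unit_potential adj u v) in
  phi u 0 - phi v 0.

(* delta_2(q) = min(sq mod N, N - (sq mod N)), s = 2^{-1} mod N = (N+1)/2 for N odd. *)
Definition inv2 (N : nat) : nat := (N.+1)./2.
Definition delta2 (N q : nat) : nat :=
  minn ((inv2 N * q) %% N) (N - (inv2 N * q) %% N).

Definition resDelta (R : rcfType) (N : nat) : R := Num.sqrt ((N * (N - 4))%N%:R).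
Definition resRho (R : rcfType) (N : nat) : R := ((N%:R - 2 + resDelta R N) / 2).

Definition res_formula (R : rcfType) (N d : nat) : R :=
  2 / (resDelta R N * (resRho R N ^+ N + 1)) *
  (resRho R N ^+ N - 1 + (-1) ^+ d * (resRho R N ^+ d - resRho R N ^+ (N - d))).

Arguments Gadj : clear implicits.
Arguments eff_res : clear implicits.

(* Main.v *)
Require Import Defs.
From HB Require Import structures.
From mathcomp Require Import all_boot all_order all_algebra.
From mathcomp Require Import ring lra zify.
From Stdlib Require Import ClassicalEpsilon.
Set Implicit Arguments. Unset Strict Implicit. Unset Printing Implicit Defensive.
Import Order.TTheory GRing.Theory Num.Theory.
Local Open Scope ring_scope.

Lemma zdiffE n (x y : 'I_n.+2) : zdiff x y = val (y - x).
Proof.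
rewrite /zdiff /= modnDmr addnBA //; exact: ltnW (ltn_ord x).
Qed.

Lemma GadjE n k (hk : (0 < k < n.+2)%N) (x y : 'I_n.+2) :
  Gadj n.+2 k x y = [&& y != x, y != x + k%:R & y != x - k%:R].
Proof.
case/andP: hk => hk0 hkN.
rewrite /Gadj zdiffE (eq_sym x y).
have vk : val (k%:R : 'I_n.+2) = k by have := @val_Zp_nat n.+2 isT k; rewrite modn_small.
have vnk : val (- (k%:R) : 'I_n.+2) = ((n.+2 - k) %% n.+2)%N.
  by rewrite /= vk.
rewrite (modn_small hkN).
have e1 : (val (y - x) != k) = (y != x + k%:R).
  by rewrite -{1}vk (inj_eq val_inj) subr_eq (addrC k%:R).
have e2 : (val (y - x) != ((n.+2 - k) %% n.+2)%N) = (y != x - k%:R).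
  by rewrite -vnk (inj_eq val_inj) subr_eq (addrC (- k%:R)).
by rewrite e1 e2.
Qed.

Lemma sum_ind (R : rcfType) n (a : 'I_n.+2) (f : 'I_n.+2 -> R) :
  \sum_y ((y == a)%:R * f y) = f a.
Proof.
rewrite (bigD1 a) //= eqxx mul1r big1 ?addr0 // => y /negbTE ->; by rewrite mul0r.
Qed.

Lemma lap_row (R : rcfType) n (adj : rel 'I_n.+2) (w : 'cV[R]_n.+2) x :
  ~~ adj x x ->
  (laplacian R adj *m w) x 0 = \sum_y (adj x y)%:R * (w x 0 - w y 0).
Proof.
move=> hxx.
rewrite mxE.
have -> : \sum_y laplacian R adj x y * w y 0 =
  \sum_y (((x == y)%:R * (#|[set k | adj x k]|)%:R) * w y 0 - (adj x y)%:R * w y 0).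
  apply: eq_bigr => y _; rewrite mxE.
  case: eqP => [<-|_]; first by rewrite (negbTE hxx) mul1r mul0r subr0.
  by rewrite mul0r mul0r mulNr sub0r.
rewrite sumrB.
have -> : \sum_y ((x == y)%:R * (#|[set k | adj x k]|)%:R * w y 0) = (#|[set k | adj x k]|)%:R * w x 0.
  rewrite -(@sum_ind R n x (fun y => (#|[set k | adj x k]|)%:R * w y 0)).
  by apply: eq_bigr => y _; rewrite eq_sym mulrA.
have -> : (#|[set k | adj x k]|)%:R = \sum_y (adj x y)%:R :> R.
  rewrite cardsE -sum1_card.
  rewrite natr_sum.
  rewrite big_mkcond.
  apply: eq_bigr => y _; rewrite unfold_in /=; by case: (adj x y).
rewrite mulr_suml -sumrB; apply: eq_bigr => y _; by rewrite mulrBr.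
Qed.

Lemma neq1 n (x c : 'I_n.+2) : c != 0 -> (x == x + c) = false.
Proof. move=> hc; apply/negbTE; rewrite eq_sym -subr_eq0 (_ : x + c - x = c) //; ring. Qed.
Lemma neq2 n (x c : 'I_n.+2) : c != 0 -> (x == x - c) = false.
Proof. move=> hc; apply/negbTE; rewrite eq_sym -subr_eq0 (_ : x - c - x = - c) ?oppr_eq0 //; ring. Qed.
Lemma neq3 n (x c : 'I_n.+2) : c + c != 0 -> (x + c == x - c) = false.
Proof. move=> hc; apply/negbTE; rewrite -subr_eq0 (_ : x + c - (x - c) = c + c) //; ring. Qed.

Lemma adj_sum (R : rcfType) n (adj : rel 'I_n.+2) (c : 'I_n.+2)
  (hadj : forall x y, adj x y = [&& y != x, y != x + c & y != x - c])
  (hc : c != 0) (hc2 : c + c != 0) x (f : 'I_n.+2 -> R) :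
  \sum_y (adj x y)%:R * f y = \sum_y f y - f x - f (x + c) - f (x - c).
Proof.
have -> : \sum_y (adj x y)%:R * f y =
  \sum_y (f y - (y == x)%:R * f y - (y == x + c)%:R * f y - (y == x - c)%:R * f y).
  apply: eq_bigr => y _; rewrite hadj.
  case: (eqVneq y x) => [->|yx] /=.
    by rewrite neq1 // neq2 // /= !mul1r !mul0r !subr0 subrr.
  case: (eqVneq y (x + c)) => [->|yc] /=.
    by rewrite neq3 // !mul1r !mul0r !subr0 subrr.
  case: (eqVneq y (x - c)) => [->|ym] /=.
    by rewrite !mul1r !mul0r !subr0 subrr.
  by rewrite !mul1r !mul0r !subr0.
rewrite !sumrB !sum_ind //.
Qed.

Lemma lap_rowc (R : rcfType) n (adj : rel 'I_n.+2) (c : 'I_n.+2)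
  (hadj : forall x y, adj x y = [&& y != x, y != x + c & y != x - c])
  (hc : c != 0) (hc2 : c + c != 0) (w : 'cV[R]_n.+2) x :
  (laplacian R adj *m w) x 0 = n%:R * w x 0 + w (x + c) 0 + w (x - c) 0 - \sum_y w y 0.
Proof.
rewrite lap_row; last by rewrite hadj eqxx.
have -> : \sum_y (adj x y)%:R * (w x 0 - w y 0) =
   (\sum_y (adj x y)%:R * 1) * w x 0 - \sum_y (adj x y)%:R * w y 0.
  rewrite mulr_suml -sumrB; apply: eq_bigr => y _; by rewrite mulr1 mulrBr.
rewrite !(@adj_sum R n adj c hadj hc hc2) sumr_const card_ord.
have -> : (n.+2)%:R = n%:R + 2 :> R by rewrite -addn2 natrD.
ring.
Qed.

Lemma eqsub n (x y z : 'I_n.+2) : (x - z == y - z) = (x == y).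
Proof. by rewrite -subr_eq0 (_ : x - z - (y - z) = x - y) ?subr_eq0 //; ring. Qed.
Lemma eqadd n (x y z : 'I_n.+2) : (x + z == y + z) = (x == y).
Proof. by rewrite -subr_eq0 (_ : x + z - (y + z) = x - y) ?subr_eq0 //; ring. Qed.

Lemma exists_notin n (s : seq 'I_n.+2) : (size s < n.+2)%N -> exists j, j \notin s.
Proof.
move=> hs; case: (pickP (fun j => j \notin s)) => [j hj|h]; first by exists j.
have : (#|'I_n.+2| <= size s)%N.
  apply: leq_trans (card_size s).
  apply: subset_leq_card; apply/subsetP => j _; by move: (h j) => /negbFE.
by rewrite card_ord leqNgt hs.
Qed.

Lemma lap_ker (R : rcfType) n (adj : rel 'I_n.+2) (c : 'I_n.+2)
  (hadj : forall x y, adj x y = [&& y != x, y != x + c & y != x - c])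
  (hc : c != 0) (hc2 : c + c != 0) (hN : (5 <= n.+2)%N) (w : 'cV[R]_n.+2) :
  laplacian R adj *m w = 0 -> forall a b, w a 0 = w b 0.
Proof.
move=> hw.
have [i _ hmax] := @arg_maxP _ R _ ord0 xpredT (fun j => w j 0) isT.
set M := w i 0 in hmax *.
have step : forall j, w j 0 = M -> forall y, adj j y -> w y 0 = M.
  move=> j hj y hy.
  have h0 : \sum_y (adj j y)%:R * (w j 0 - w y 0) = 0.
    by rewrite -lap_row ?hadj ?eqxx // hw mxE.
  have hnn : forall k, xpredT k -> 0 <= (adj j k)%:R * (w j 0 - w k 0).
    move=> k _; rewrite hj; apply: mulr_ge0; first by rewrite ler0n.
    by rewrite subr_ge0; apply: hmax.
  have := @psumr_eq0P R _ xpredT (fun k => (adj j k)%:R * (w j 0 - w k 0)) hnn h0 y isT.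
  by rewrite hy mul1r => /eqP; rewrite subr_eq0 hj => /eqP <-.
have all : forall z, w z 0 = M.
  move=> z.
  case: (eqVneq z i) => [->//|zi].
  case: (eqVneq z (i + c)) => [->|zc]; last first.
    case: (eqVneq z (i - c)) => [->|zm]; last by apply: (step i) => //; rewrite hadj zi zc zm.
    have [j hj] := @exists_notin n [:: i; i + c; i - c; i - c - c] (leq_trans (isT : (4 < 5)%N) hN).
    rewrite !inE !negb_or in hj; case/and4P: hj => j1 j2 j3 j4.
    apply: (step j); first by apply: (step i) => //; rewrite hadj j1 j2 j3.
    rewrite hadj.
    apply/and3P; split.
    - by rewrite eq_sym.
    - by rewrite -subr_eq eq_sym.
    - by rewrite eqsub eq_sym.
  have [j hj] := @exists_notin n [:: i; i + c; i - c; i + c + c] (leq_trans (isT : (4 < 5)%N) hN).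
  rewrite !inE !negb_or in hj; case/and4P: hj => j1 j2 j3 j4.
  apply: (step j); first by apply: (step i) => //; rewrite hadj j1 j2 j3.
  rewrite hadj.
  apply/and3P; split.
  - by rewrite eq_sym.
  - by rewrite eqadd eq_sym.
  - by rewrite eq_sym subr_eq.
by move=> a b; rewrite !all.
Qed.

Definition hh (R : rcfType) n (y : R) (j : nat) : R := y ^+ j + y ^+ (n.+2 - j).
Definition EE (R : rcfType) n (y : R) : R := n%:R * hh n y 0 + hh n y 1 + hh n y n.+1.
Definition GG (R : rcfType) n (y : R) (z : 'I_n.+2) : R := (EE n y)^-1 * hh n y (val z).

Lemma hh_sym (R : rcfType) n (y : R) j : (j <= n.+2)%N -> hh n y (n.+2 - j) = hh n y j.
Proof. by move=> hj; rewrite /hh subKn // addrC. Qed.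

Lemma hh_mod (R : rcfType) n (y : R) j : (j <= n.+2)%N -> hh n y (j %% n.+2) = hh n y j.
Proof.
rewrite leq_eqVlt => /orP [/eqP ->|hj]; last by rewrite modn_small.
by rewrite modnn -{1}(subnn n.+2) hh_sym.
Qed.

Lemma hh_rec (R : rcfType) n (y : R) (hy : y ^+ 2 + n%:R * y + 1 = 0) m :
  (m.+2 <= n.+2)%N -> hh n y m + n%:R * hh n y m.+1 + hh n y m.+2 = 0.
Proof.
move=> hm; rewrite /hh.
set p := (n.+2 - m.+2)%N.
have e0 : (n.+2 - m = p.+2)%N by rewrite /p; lia.
have e1 : (n.+2 - m.+1 = p.+1)%N by rewrite /p; lia.
rewrite e0 e1 -/p !exprS.
have -> : y ^+ m + y * (y * y ^+ p) + n%:R * (y * y ^+ m + y * y ^+ p) + (y * (y * y ^+ m) + y ^+ p)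
   = (y ^+ m + y ^+ p) * (y ^+ 2 + n%:R * y + 1) by ring.
by rewrite hy mulr0.
Qed.

Lemma val_add n (x y : 'I_n.+2) : val (x + y) = ((val x + val y) %% n.+2)%N.
Proof. by []. Qed.
Lemma val_opp n (x : 'I_n.+2) : val (- x) = ((n.+2 - val x) %% n.+2)%N.
Proof. by []. Qed.
Lemma val_mul n (x y : 'I_n.+2) : val (x * y) = ((val x * val y) %% n.+2)%N.
Proof. by []. Qed.
Lemma val_one n : val (1 : 'I_n.+2) = 1%N.
Proof. by rewrite /= modn_small. Qed.

Lemma GG_rec (R : rcfType) n (y : R) (hy : y ^+ 2 + n%:R * y + 1 = 0)
  (hE : EE n y != 0) (z : 'I_n.+2) :
  n%:R * GG y z + GG y (z + 1) + GG y (z - 1) = (z == 0)%:R.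
Proof.
rewrite /GG.
have -> : forall a b c : R, n%:R * ((EE n y)^-1 * a) + (EE n y)^-1 * b + (EE n y)^-1 * c
   = (EE n y)^-1 * (n%:R * a + b + c) by move=> a b c; ring.
case: (eqVneq z 0) => [->|hz].
  rewrite add0r sub0r val_opp val_one.
  rewrite (modn_small (_ : n.+2 - 1 < n.+2)%N) ?subn1 //=.
  by rewrite mulVf.
have [m hm] : exists m, val z = m.+1.
  case E: (val z) => [|m]; last by exists m.
  by move: hz; rewrite -(inj_eq val_inj) E.
have hzN := ltn_ord z; rewrite hm in hzN.
rewrite val_add val_add val_opp val_one hm.
rewrite hh_mod; last by rewrite addn1.
have -> : ((m.+1 + (n.+2 - 1) %% n.+2) %% n.+2 = m)%N.
  rewrite (modn_small (_ : n.+2 - 1 < n.+2)%N) //.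
  have -> : (m.+1 + (n.+2 - 1) = m + n.+2)%N by lia.
  by rewrite modnDr modn_small //; lia.
rewrite addn1 (_ : n%:R * hh n y m.+1 + hh n y m.+2 + hh n y m = hh n y m + n%:R * hh n y m.+1 + hh n y m.+2); last by ring.
by rewrite hh_rec // mulr0.
Qed.

Definition pot (R : rcfType) n (y : R) (s a b : 'I_n.+2) : 'cV[R]_n.+2 :=
  \col_i (GG y (s * (i - a)) - GG y (s * (i - b))).

Lemma sum_shift (R : rcfType) n (s c a : 'I_n.+2) (hsc : s * c = 1) (F : 'I_n.+2 -> R) :
  \sum_i F (s * (i - a)) = \sum_i F i.
Proof.
have e : forall z, s * (c * z + a - a) = z.
  move=> z; have -> : s * (c * z + a - a) = (s * c) * z by ring.
  by rewrite hsc mul1r.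
rewrite (reindex_inj (h := fun z => c * z + a)); last first.
  by move=> x1 x2 /(congr1 (fun t => s * (t - a))); rewrite !e.
by apply: eq_bigr => z _; rewrite e.
Qed.

Lemma eq0s n (s c a i : 'I_n.+2) (hsc : s * c = 1) : (s * (i - a) == 0) = (i == a).
Proof.
apply/eqP/eqP => [h|->]; last by rewrite subrr mulr0.
have : c * (s * (i - a)) = 0 by rewrite h mulr0.
rewrite mulrA (mulrC c) hsc mul1r => /eqP; by rewrite subr_eq0 => /eqP.
Qed.

Lemma pot_ok (R : rcfType) n (adj : rel 'I_n.+2) (c s : 'I_n.+2)
  (hadj : forall x y, adj x y = [&& y != x, y != x + c & y != x - c])
  (hc : c != 0) (hc2 : c + c != 0) (hsc : s * c = 1)
  (y : R) (hy : y ^+ 2 + n%:R * y + 1 = 0) (hE : EE n y != 0) (a b : 'I_n.+2) :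
  unit_potential adj a b (pot y s a b).
Proof.
rewrite /unit_potential; apply/matrixP => i j; rewrite (ord1 j) (lap_rowc hadj) //.
have -> : \sum_k pot y s a b k 0 = 0.
  rewrite /pot; under eq_bigr do rewrite mxE.
  by rewrite sumrB (sum_shift _ hsc (GG y)) (sum_shift _ hsc (GG y)) subrr.
rewrite /pot !mxE.
have e1 : forall t, s * (i + c - t) = s * (i - t) + 1.
  move=> t; have -> : s * (i + c - t) = s * (i - t) + s * c by ring.
  by rewrite hsc.
have e2 : forall t, s * (i - c - t) = s * (i - t) - 1.
  move=> t; have -> : s * (i - c - t) = s * (i - t) - s * c by ring.
  by rewrite hsc.
rewrite !e1 !e2.
set A := s * (i - a); set B := s * (i - b).
have -> : n%:R * (GG y A - GG y B) + (GG y (A + 1) - GG y (B + 1)) + (GG y (A - 1) - GG y (B - 1)) - 0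
  = (n%:R * GG y A + GG y (A + 1) + GG y (A - 1)) - (n%:R * GG y B + GG y (B + 1) + GG y (B - 1)) by ring.
rewrite !GG_rec // /A /B !(eq0s _ _ hsc) !andbT.
by [].
Qed.

Lemma GG_opp (R : rcfType) n (y : R) (z : 'I_n.+2) : GG y (- z) = GG y z.
Proof. rewrite /GG val_opp.
rewrite hh_mod ?leq_subr // hh_sym //; exact: ltnW (ltn_ord z). Qed.

Definition resv (R : rcfType) n (y : R) (j : nat) : R :=
  2 * (EE n y)^-1 * (hh n y 0 - hh n y j).

Lemma pot_diff (R : rcfType) n (y : R) (s a b : 'I_n.+2) :
  pot y s a b a 0 - pot y s a b b 0 = resv n y (val (s * (b - a))).
Proof.
rewrite /pot !mxE !subrr mulr0.
have -> : s * (a - b) = - (s * (b - a)) by ring.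
rewrite GG_opp /resv /GG /=; ring.
Qed.

Lemma res_val (R : rcfType) n (adj : rel 'I_n.+2) (c s : 'I_n.+2)
  (hadj : forall x y, adj x y = [&& y != x, y != x + c & y != x - c])
  (hc : c != 0) (hc2 : c + c != 0) (hsc : s * c = 1) (hN : (5 <= n.+2)%N)
  (y : R) (hy : y ^+ 2 + n%:R * y + 1 = 0) (hE : EE n y != 0) (a b : 'I_n.+2)
  (phi : 'cV[R]_n.+2) :
  unit_potential adj a b phi -> phi a 0 - phi b 0 = resv n y (val (s * (b - a))).
Proof.
move=> hphi.
have hp := pot_ok hadj hc hc2 hsc hy hE a b.
have hw : laplacian R adj *m (phi - pot y s a b) = 0.
  by rewrite mulmxBr hphi hp subrr.
have := lap_ker hadj hc hc2 hN hw a b.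
rewrite !mxE => h.
rewrite -pot_diff /pot !mxE.
lra.
Qed.

Lemma eff_val (R : rcfType) n (adj : rel 'I_n.+2) (c s : 'I_n.+2)
  (hadj : forall x y, adj x y = [&& y != x, y != x + c & y != x - c])
  (hc : c != 0) (hc2 : c + c != 0) (hsc : s * c = 1) (hN : (5 <= n.+2)%N)
  (y : R) (hy : y ^+ 2 + n%:R * y + 1 = 0) (hE : EE n y != 0) (a b : 'I_n.+2) :
  eff_res R n.+2 adj a b = resv n y (val (s * (b - a))).
Proof.
rewrite /eff_res.
have := @epsilon_spec _ (inhabits (0 : 'cV[R]_n.+2)) (unit_potential adj a b)
  (ex_intro _ _ (pot_ok hadj hc hc2 hsc hy hE a b)).
exact: res_val hadj hc hc2 hsc hN y hy hE a b _.
Qed.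

Lemma alg_facts (R : rcfType) n (hodd : odd n.+2) (hN : (5 <= n.+2)%N) :
  let y := - resRho R n.+2 in
  [/\ y ^+ 2 + n%:R * y + 1 = 0, EE n y != 0 &
      forall d, (d <= n.+2)%N -> resv n y d = res_formula R n.+2 d].
Proof.
move=> y.
set D := resDelta R n.+2.
set r := resRho R n.+2.
have hN2 : (n.+2)%:R = n%:R + 2 :> R by rewrite -addn2 natrD.
have hD2 : D ^+ 2 = (n%:R + 2) * (n%:R - 2) :> R.
  rewrite /D /resDelta sqr_sqrtr ?ler0n // natrM natrB; last by lia.
  by rewrite hN2; congr (_ * _); ring.
have hDpos : 0 < D.
  rewrite /D /resDelta sqrtr_gt0 ltr0n muln_gt0; apply/andP; split; lia.
have hn3 : 3 <= n%:R :> R by rewrite (ler_nat R 3 n); lia.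
have hr : r = (n%:R + D) / 2 by rewrite /r /resRho hN2 addrK.
have hr1 : 1 < r by rewrite hr; lra.
have hrr : r ^+ 2 - n%:R * r + 1 = 0.
  rewrite hr.
  have -> : ((n%:R + D) / 2) ^+ 2 - n%:R * ((n%:R + D) / 2) + 1 =
     (D ^+ 2 - (n%:R + 2) * (n%:R - 2)) / 4 :> R by field.
  by rewrite hD2 subrr mul0r.
have hy : y ^+ 2 + n%:R * y + 1 = 0.
  by rewrite /y sqrrN mulrN -hrr.
have hodd1 : odd n.+1 = false by move: hodd => /= /negPf.
have yN : y ^+ n.+2 = - r ^+ n.+2.
  by rewrite /y exprNn -signr_odd hodd expr1 mulN1r.
have yN1 : y ^+ n.+1 = r ^+ n.+1.
  by rewrite /y exprNn -signr_odd hodd1 expr0 mul1r.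
set Q := r ^+ n.+1.
have hP : r ^+ n.+2 = r * Q by rewrite exprS.
have hEv : EE n y = - (D * (1 + r ^+ n.+2)).
  rewrite /EE /hh subn0 expr0 expr1 yN.
  rewrite subn1 (_ : (n.+2 - n.+1 = 1)%N) ?subSnn // expr1 /= yN1 hP -/Q.
  have hr0 : r != 0 by apply/eqP => h; rewrite h in hr1; lra.
  apply: (mulfI hr0); apply/eqP; rewrite -subr_eq0; apply/eqP.
  have hD : D = 2 * r - n%:R by rewrite hr; field.
  rewrite hD.
  have -> : r * (n%:R * (1 + - (r * Q)) + (- r + Q) + (Q + - r)) -
      r * - ((2 * r - n%:R) * (1 + r * Q)) = 2 * r * Q * (r ^+ 2 - n%:R * r + 1) by ring.
  by rewrite hrr mulr0.
have hQ : 0 < Q by rewrite exprn_gt0 //; lra.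
have hPpos : 0 < 1 + r ^+ n.+2 by rewrite hP; nra.
split => //.
  rewrite hEv oppr_eq0 mulf_eq0 negb_or; apply/andP; split; apply/eqP => h; lra.
move=> d hd.
rewrite /resv /res_formula -/D -/r hEv /hh subn0 expr0 yN.
have sgn : (-1) ^+ (n.+2 - d) = - (-1) ^+ d :> R.
  rewrite -signr_odd oddB // hodd -[in RHS]signr_odd.
  by case: (odd d); rewrite /= ?expr0 ?expr1 ?opprK.
rewrite /y (exprNn r d) (exprNn r (n.+2 - d)) sgn.
have hPAB : r ^+ n.+2 = r ^+ d * r ^+ (n.+2 - d) by rewrite -exprD subnKC.
rewrite hPAB in hPpos *.
set A := r ^+ d; set B := r ^+ (n.+2 - d); set sd := (-1) ^+ d.
rewrite (addrC 1 (A * B)) invrN.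
set iX := (D * (A * B + 1))^-1.
ring.
Qed.

Lemma val_nat n k : val (k%:R : 'I_n.+2) = (k %% n.+2)%N.
Proof. exact: (@val_Zp_nat n.+2 isT k). Qed.

Lemma nat_neq0 n k : (0 < k < n.+2)%N -> (k%:R : 'I_n.+2) != 0.
Proof.
move=> /andP [h0 h1]; apply/eqP => /(congr1 val); rewrite val_nat modn_small //=.
by move=> h; rewrite h in h0.
Qed.

Unset Implicit Arguments.

Theorem theorem4p3 (R : rcfType) (N : nat) (hodd : odd N) (hN : (5 <= N)%N)
  (u v : 'I_N) :
  let q := zdiff u v in
  let d := delta2 N q in
  (forall x y : 'I_N, val x = 0%N -> val y = d ->
     eff_res R N (Gadj N 2) u v = eff_res R N (Gadj N 1) x y) /\
  eff_res R N (Gadj N 2) u v = res_formula R N d.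
Proof.
case: N hodd hN u v => [|[|n]] // hodd hN u v q d.
have [hy hE hres] := alg_facts R hodd hN.
set y0 := - resRho R n.+2 in hy hE hres.
have h1 := GadjE (n:=n) (k:=1) (isT : (0 < 1 < n.+2)%N).
have hk2 : (0 < 2 < n.+2)%N by lia.
have h2 := GadjE hk2.
have c1 : (1%:R : 'I_n.+2) != 0 by apply: nat_neq0.
have c12 : (1%:R + 1%:R : 'I_n.+2) != 0 by rewrite -natrD; apply: nat_neq0; lia.
have c2 : (2%:R : 'I_n.+2) != 0 by apply: nat_neq0; lia.
have c22 : (2%:R + 2%:R : 'I_n.+2) != 0 by rewrite -natrD; apply: nat_neq0; lia.
have s1 : (1 : 'I_n.+2) * 1%:R = 1 by rewrite mul1r.
have hinv : (inv2 n.+2 * 2 = n.+3)%N.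
  rewrite /inv2 muln2 -[RHS](odd_double_half n.+3).
  by move: hodd => /= ->.
have s2 : ((inv2 n.+2)%:R : 'I_n.+2) * 2%:R = 1.
  rewrite -natrM hinv; apply: val_inj; rewrite val_nat val_one.
  by rewrite -(addn1 n.+2) modnDl modn_small.
have e2 := eff_val h2 c2 c22 s2 hN hy hE u v.
have dN : (d <= n.+2)%N by rewrite /d /delta2; exact: leq_trans (geq_minr _ _) (leq_subr _ _).
have ed : resv n y0 (val (((inv2 n.+2)%:R * (v - u))%R : 'I_n.+2)) = resv n y0 d.
  rewrite /resv /d /delta2 /q zdiffE val_mul val_nat modnMml.
  set d' := ((inv2 n.+2 * val (v - u)%R) %% n.+2)%N.
  have hd' : (d' <= n.+2)%N by apply: ltnW; apply: ltn_pmod.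
  case: (leqP d' (n.+2 - d')) => hle.
    by [].
  by rewrite hh_sym.
split.
  move=> x y hx hy'.
  have -> : x = 0 by apply: val_inj.
  rewrite (eff_val h1 c1 c12 s1 hN hy hE) subr0 mul1r hy' e2 ed //.
rewrite e2 ed hres //.
Qed.
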